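(* Let $H\subset\mathbb{R}^n$ be a bounded domain, $c\ge0$ in $H$, and let $u\in C^2(H)\cap C(\overline H)$ satisfy $D_{H,\varphi}u+c(x)u\ge0$ in $H$ and $u=\varphi$ on $\partial H$, where $\varphi\ge0$ on $\partial H$. Then $u\ge0$ in $H$.
   Context: For an open set $H\subset\mathbb{R}^n$, a function $\varphi$ on $\partial H$ (boundary datum) and $u$ on $\overline H$ with $u=\varphi$ on $\partial H$, let $v$ be the bounded harmonic function in the cylinder $\Omega=H\times(0,\infty)$, continuous up to the boundary, with $v(x,0)=u(x)$ for $x\in H$ and lateral data $v(x,\lambda)=\varphi(x)$ for $(x,\lambda)\in\partial H\times[0,\infty)$. Then $D_{H,\varphi}u(x):=-\partial_\lambda v(x,0)$ for $x\in H$. (When $\varphi\equiv0$ this is the operator $A_{1/2}$, a square root of the Dirichlet Laplacian in $H$.) *)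

(* Defs.v *)
From Stdlib Require Import Reals.
From mathcomp Require Import ssreflect ssrfun ssrbool eqtype ssrnat seq fintype bigop.
Open Scope R_scope.

Definition pt (n : nat) := 'I_n -> R.

Definition sumR {n : nat} (F : 'I_n -> R) : R := \big[Rplus/R0]_(i : 'I_n) F i.

Definition enorm {n} (x : pt n) : R := sqrt (sumR (fun i => Rsqr (x i))).
Definition edist {n} (x y : pt n) : R := sqrt (sumR (fun i => Rsqr (x i - y i))).

Definition is_open {n} (S : pt n -> Prop) : Prop :=
  forall x, S x -> exists r, 0 < r /\ forall y, edist x y < r -> S y.

Definition is_bounded {n} (S : pt n -> Prop) : Prop :=
  exists M, forall x, S x -> enorm x <= M.

Definition is_connected {n} (S : pt n -> Prop) : Prop :=
  forall U V : pt n -> Prop, is_open U -> is_open V ->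
    (forall x, S x -> U x \/ V x) -> (forall x, S x -> ~ (U x /\ V x)) ->
    (forall x, S x -> U x) \/ (forall x, S x -> V x).

Definition is_domain {n} (S : pt n -> Prop) : Prop :=
  is_open S /\ is_connected S /\ exists x, S x.

Definition closure {n} (S : pt n -> Prop) : pt n -> Prop :=
  fun x => forall r, 0 < r -> exists y, S y /\ edist x y < r.

Definition boundary {n} (S : pt n -> Prop) : pt n -> Prop :=
  fun x => closure S x /\ ~ S x.

Definition cont_on {n} (S : pt n -> Prop) (f : pt n -> R) : Prop :=
  forall x, S x -> forall eps, 0 < eps -> exists d, 0 < d /\
    forall y, S y -> edist x y < d -> Rabs (f y - f x) < eps.

Definition upd {n} (x : pt n) (i : 'I_n) (t : R) : pt n :=
  fun j => if j == i then t else x j.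

Definition is_partial {n} (f : pt n -> R) (i : 'I_n) (x : pt n) (l : R) : Prop :=
  derivable_pt_lim (fun t => f (upd x i t)) (x i) l.

Definition C2_data {n} (S : pt n -> Prop) (f : pt n -> R)
  (Df : 'I_n -> pt n -> R) (D2f : 'I_n -> 'I_n -> pt n -> R) : Prop :=
  (forall i x, S x -> is_partial f i x (Df i x)) /\
  (forall i j x, S x -> is_partial (Df i) j x (D2f i j x)) /\
  cont_on S f /\ (forall i, cont_on S (Df i)) /\ (forall i j, cont_on S (D2f i j)).

Definition C2_on {n} (S : pt n -> Prop) (f : pt n -> R) : Prop :=
  exists Df D2f, C2_data S f Df D2f.

Definition harmonic_on {n} (S : pt n -> Prop) (f : pt n -> R) : Prop :=
  exists Df D2f, C2_data S f Df D2f /\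
    forall x, S x -> sumR (fun i => D2f i i x) = 0.

(* R^{n+1} = R^n x R, the last coordinate (ord_max) being lambda. *)
Definition ext {n} (x : pt n) (l : R) : pt n.+1 :=
  fun j => match unlift ord_max j with Some i => x i | None => l end.
Definition base {n} (y : pt n.+1) : pt n := fun i => y (lift ord_max i).

Definition cyl {n} (H : pt n -> Prop) : pt n.+1 -> Prop :=
  fun y => H (base y) /\ 0 < y ord_max.

Definition is_ext {n} (H : pt n -> Prop) (phi u : pt n -> R) (v : pt n.+1 -> R) : Prop :=
  harmonic_on (cyl H) v /\
  (exists M, forall y, cyl H y -> Rabs (v y) <= M) /\
  cont_on (closure (cyl H)) v /\
  (forall x, H x -> v (ext x 0) = u x) /\
  (forall x l, boundary H x -> 0 <= l -> v (ext x l) = phi x).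

Definition right_deriv (g : R -> R) (a l : R) : Prop :=
  forall eps, 0 < eps -> exists d, 0 < d /\
    forall h, 0 < h -> h < d -> Rabs ((g (a + h) - g a) / h - l) < eps.

Definition DHphi {n} (H : pt n -> Prop) (phi u : pt n -> R) (x : pt n) (d : R) : Prop :=
  exists v, is_ext H phi u v /\ right_deriv (fun l => v (ext x l)) 0 (- d).

(* Main.v *)
Require Import Defs.
From Stdlib Require Import Reals.
From mathcomp Require Import ssreflect ssrfun ssrbool eqtype ssrnat seq fintype bigop.
From Stdlib Require Import Lra FunctionalExtensionality Classical ClassicalEpsilon.
From Coquelicot Require Compactness.
From HB Require Import structures.
Open Scope R_scope.

HB.instance Definition _ := Monoid.isComLaw.Build R R0 Rplus (fun a b c => esym (Rplus_assoc a b c)) Rplus_comm Rplus_0_l.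

Lemma sumR_le {N} (F G : 'I_N -> R) : (forall i, F i <= G i) -> sumR F <= sumR G.
Proof.
move=> h; rewrite /sumR; apply: (big_ind2 (fun a b => a <= b)) => //; first lra.
move=> *; lra.
Qed.

Lemma sumR_split {N} (F G : 'I_N -> R) : sumR (fun i => F i + G i) = sumR F + sumR G.
Proof. by rewrite /sumR big_split. Qed.

Lemma sumR_opp {N} (F : 'I_N -> R) : sumR (fun i => - F i) = - sumR F.
Proof.
rewrite /sumR; apply: (big_ind2 (fun a b => a = - b)) => //; first lra.
move=> *; subst; lra.
Qed.

Lemma sumR_D1 {N} (F : 'I_N -> R) j : sumR F = F j + \big[Rplus/R0]_(i | i != j) F i.
Proof. by rewrite /sumR (bigD1 j). Qed.

Lemma bigR_ge0 {N} (P : pred 'I_N) (F : 'I_N -> R) : (forall i, 0 <= F i) -> 0 <= \big[Rplus/R0]_(i | P i) F i.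
Proof. move=> h; apply: (big_ind (fun a => 0 <= a)) => //; [lra | move=> *; lra]. Qed.

Lemma sumR_ge0 {N} (F : 'I_N -> R) : (forall i, 0 <= F i) -> 0 <= sumR F.
Proof. exact: bigR_ge0. Qed.

Lemma sumR_one {N} (F : 'I_N -> R) j : (forall i, i != j -> F i = 0) -> sumR F = F j.
Proof.
move=> h; rewrite (sumR_D1 _ j) big1; first lra.
by move=> i /h.
Qed.

Lemma sumR_two {N} (F : 'I_N -> R) j k : j != k -> (forall i, i != j -> i != k -> F i = 0) -> sumR F = F j + F k.
Proof.
move=> jk h; rewrite (sumR_D1 _ j) (bigD1 k) /=; last by rewrite eq_sym jk.
rewrite big1; first lra.
by move=> i /andP [] /h H /H.
Qed.

Lemma sumR_term {N} (F : 'I_N -> R) j : (forall i, 0 <= F i) -> F j <= sumR F.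
Proof. move=> h; rewrite (sumR_D1 _ j); have H0 : 0 <= \big[Rplus/R0]_(i | i != j) F i by apply: bigR_ge0. lra. Qed.

Lemma sumR_lt {N} (F G : 'I_N -> R) : (0 < N)%nat -> (forall i, F i < G i) -> sumR F < sumR G.
Proof.
case: N F G => // N F G _ h.
rewrite (sumR_D1 F ord0) (sumR_D1 G ord0).
have := h ord0.
have : \big[Rplus/R0]_(i | i != ord0) F i <= \big[Rplus/R0]_(i | i != ord0) G i.
  apply: (big_ind2 (fun a b => a <= b)) => //; first lra.
  by move=> *; lra. by move=> i _; have := h i; lra.
lra.
Qed.

Lemma sumR_const {N} (c : R) : sumR (fun _ : 'I_N => c) = INR N * c.
Proof.
rewrite /sumR big_const card_ord; elim: N => [|N IH] /=; first lra.
rewrite IH; case: N {IH} => [|N] /=; lra.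
Qed.


Lemma sumR_recr {N} (F : 'I_N.+1 -> R) : sumR F = sumR (fun i => F (widen_ord (leqnSn N) i)) + F ord_max.
Proof. by rewrite /sumR big_ord_recr. Qed.

Lemma sq_sum_le {N} (a : 'I_N -> R) : sumR (fun i => Rsqr (a i)) <= Rsqr (sumR (fun i => Rabs (a i))).
Proof.
elim: N a => [|N IH] a.
  rewrite /sumR !big_ord0 /Rsqr; lra.
rewrite !sumR_recr.
have h := IH (fun i => a (widen_ord (leqnSn N) i)).
have h0 : 0 <= sumR (fun i => Rabs (a (widen_ord (leqnSn N) i))) by apply: sumR_ge0 => i; apply: Rabs_pos.
have h1 := Rabs_pos (a ord_max).
have h2 : Rsqr (a ord_max) = Rsqr (Rabs (a ord_max)) by rewrite Rsqr_abs.
rewrite h2; move: h; rewrite /Rsqr; nra.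
Qed.

Lemma sqrt_sum_le {N} (a : 'I_N -> R) : sqrt (sumR (fun i => Rsqr (a i))) <= sumR (fun i => Rabs (a i)).
Proof.
have h0 : 0 <= sumR (fun i => Rabs (a i)) by apply: sumR_ge0 => i; apply: Rabs_pos.
rewrite -(sqrt_Rsqr (sumR (fun i => Rabs (a i)))) //.
apply: sqrt_le_1_alt; apply: sq_sum_le.
Qed.

Lemma edist_le_sum {N} (x y : pt N) : edist x y <= sumR (fun i => Rabs (x i - y i)).
Proof. exact: (sqrt_sum_le (fun i => x i - y i)). Qed.

Lemma coord_le_edist {N} (x y : pt N) i : Rabs (x i - y i) <= edist x y.
Proof.
rewrite /edist -sqrt_Rsqr_abs; apply: sqrt_le_1_alt.
apply: (sumR_term (fun i => Rsqr (x i - y i))) => j; apply: Rle_0_sqr.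
Qed.

Lemma coord_le_enorm {N} (x : pt N) i : Rabs (x i) <= enorm x.
Proof.
rewrite /enorm -sqrt_Rsqr_abs; apply: sqrt_le_1_alt.
apply: (sumR_term (fun i => Rsqr (x i))) => j; apply: Rle_0_sqr.
Qed.

Lemma edist_sym {N} (x y : pt N) : edist x y = edist y x.
Proof.
rewrite /edist /sumR; congr sqrt; apply: eq_bigr => i _.
by rewrite -Rsqr_neg_minus.
Qed.

Lemma edist_self {N} (x : pt N) : edist x x = 0.
Proof.
rewrite /edist /sumR big1 ?sqrt_0 // => i _; rewrite Rminus_diag /Rsqr; lra.
Qed.

Lemma edist_ge0 {N} (x y : pt N) : 0 <= edist x y.
Proof. exact: sqrt_pos. Qed.

Lemma close_coords {N} (x y : pt N) e : (0 < N)%nat -> (forall i, Rabs (x i - y i) < e) ->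
  edist x y < INR N * e.
Proof.
move=> hN h; apply: (Rle_lt_trans _ _ _ (edist_le_sum x y)).
rewrite -sumR_const; exact: sumR_lt.
Qed.

Lemma close_coords' {N} (x y : pt N) d : (0 < N)%nat -> 0 < d ->
  (forall i, Rabs (x i - y i) < d / INR N) -> edist x y < d.
Proof.
move=> hN hd h; have hN' : 0 < INR N by apply: lt_0_INR; apply/ltP.
have := close_coords x y (d / INR N) hN h.
have -> : INR N * (d / INR N) = d by field; lra.
done.
Qed.

Lemma upd_same {N} (x : pt N) i t : upd x i t i = t.
Proof. by rewrite /upd eqxx. Qed.
Lemma upd_other {N} (x : pt N) i j t : j != i -> upd x i t j = x j.
Proof. by rewrite /upd => /negbTE ->. Qed.
Lemma upd_upd {N} (x : pt N) i t s : upd (upd x i t) i s = upd x i s.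
Proof. apply: functional_extensionality => j; rewrite /upd; by case: (j == i). Qed.
Lemma upd_id {N} (x : pt N) i : upd x i (x i) = x.
Proof. apply: functional_extensionality => j; rewrite /upd; by case: (j =P i) => [->|]. Qed.

Lemma edist_upd {N} (x : pt N) i t : edist x (upd x i t) <= Rabs (x i - t).
Proof.
apply: (Rle_trans _ _ _ (edist_le_sum _ _)).
rewrite (sumR_one _ i) ?upd_same; first lra.
move=> j hj; rewrite upd_other // Rminus_diag Rabs_R0 //.
Qed.


Lemma abs_lt x a : Rabs x < a -> -a < x < a.
Proof. move/Rabs_def2; lra. Qed.
Lemma abs_le x a : Rabs x <= a -> -a <= x <= a.
Proof. unfold Rabs; destruct (Rcase_abs x); lra. Qed.
Lemma lt_abs x a : -a < x < a -> Rabs x < a.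
Proof. unfold Rabs; destruct (Rcase_abs x); lra. Qed.
Lemma le_abs x a : -a <= x <= a -> Rabs x <= a.
Proof. unfold Rabs; destruct (Rcase_abs x); lra. Qed.

Lemma sub_closure {N} (S : pt N -> Prop) x : S x -> closure S x.
Proof. move=> hx r hr; exists x; split => //; rewrite edist_self //. Qed.

Lemma closure_mono {N} (S T : pt N -> Prop) x : (forall y, S y -> T y) -> closure S x -> closure T x.
Proof. move=> h hx r hr; case: (hx r hr) => y [hy hd]; exists y; split => //; exact: h. Qed.

Lemma closure_coord {N} (S : pt N -> Prop) (P : R -> Prop) i x :
  (forall a, (forall r, 0 < r -> exists b, P b /\ Rabs (a - b) < r) -> P a) ->
  (forall y, S y -> P (y i)) -> closure S x -> P (x i).
Proof.
move=> hP hS hx; apply: hP => r hr; case: (hx r hr) => y [hy hd].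
exists (y i); split; first exact: hS.
exact: (Rle_lt_trans _ _ _ (coord_le_edist x y i)).
Qed.

Lemma closure_le {N} (S : pt N -> Prop) i x B : (forall y, S y -> y i <= B) -> closure S x -> x i <= B.
Proof.
move=> h; apply: (closure_coord S (fun a => a <= B)) => // a ha.
apply: Rnot_lt_le => hlt; case: (ha (a - B)) => [|b [hb hab]]; first lra.
move/abs_lt: hab; lra.
Qed.

Lemma closure_ge {N} (S : pt N -> Prop) i x B : (forall y, S y -> B <= y i) -> closure S x -> B <= x i.
Proof.
move=> h; apply: (closure_coord S (fun a => B <= a)) => // a ha.
apply: Rnot_lt_le => hlt; case: (ha (B - a)) => [|b [hb hab]]; first lra.
move/abs_lt: hab; lra.
Qed.

Lemma closure_abs {N} (S : pt N -> Prop) i x B : (forall y, S y -> Rabs (y i) <= B) -> closure S x -> Rabs (x i) <= B.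
Proof.
move=> h hx; apply: le_abs; split.
- apply: (closure_ge S) hx => y /h; move/abs_le; lra.
- apply: (closure_le S) hx => y /h; move/abs_le; lra.
Qed.


Fixpoint toT (N : nat) : pt N -> Compactness.Tn N R :=
  match N return pt N -> Compactness.Tn N R with
  | 0 => fun _ => tt
  | N'.+1 => fun x => (x ord0, toT N' (fun i => x (lift ord0 i)))
  end.
Fixpoint ofT (N : nat) : Compactness.Tn N R -> pt N :=
  match N return Compactness.Tn N R -> pt N with
  | 0 => fun _ _ => 0
  | N'.+1 => fun p i => match unlift ord0 i with None => fst p | Some j => ofT N' (snd p) j end
  end.
Fixpoint cstT (N : nat) (c : R) : Compactness.Tn N R :=
  match N return Compactness.Tn N R with 0 => tt | N'.+1 => (c, cstT N' c) end.

Lemma bounded_toT N a b (x : pt N) : (forall i, a <= x i <= b) ->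
  Compactness.bounded_n N (cstT N a) (cstT N b) (toT N x).
Proof.
elim: N x => [|N IH] x h //=; split; first exact: h.
apply: IH => i; exact: h.
Qed.

Lemma close_toT N d (x : pt N) t : Compactness.close_n N d (toT N x) t ->
  forall i, Rabs (x i - ofT N t i) < d.
Proof.
elim: N x t => [|N IH] x t /=; first by move=> _ [].
case: t => t1 t2 [h1 h2] i.
case: (unliftP ord0 i) => [j ->|->].
- exact: IH h2 j.
- exact: h1.
Qed.

Lemma choice_R {A : Type} (P : A -> R -> Prop) : (forall a, exists d, P a d) -> exists g, forall a, P a (g a).
Proof.
move=> h; exists (fun a => proj1_sig (constructive_indefinite_description _ (h a))).
move=> a; exact: proj2_sig (constructive_indefinite_description _ (h a)).
Qed.

Lemma attain_min N (S : pt N -> Prop) (f : pt N -> R) B : (0 < N)%nat ->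
  (forall x, S x -> forall i, Rabs (x i) <= B) -> (exists x, S x) -> cont_on (closure S) f ->
  exists y, closure S y /\ forall z, closure S z -> f y <= f z.
Proof.
move=> hN hB [x0 hx0] hf.
have hN' : 0 < INR N by apply: lt_0_INR; apply/ltP.
apply: NNPP => hno.
have hno' : forall y, closure S y -> exists z, closure S z /\ f z < f y.
  move=> y hy; apply: NNPP => hne; apply: hno; exists y; split => // z hz.
  apply: Rnot_lt_le => hlt; apply: hne; by exists z.
pose G t d := 0 < d /\
  (closure S t -> exists z, closure S z /\ forall y, closure S y -> (forall i, Rabs (y i - t i) < d) -> f z < f y) /\
  (~ closure S t -> forall y, closure S y -> ~ (forall i, Rabs (y i - t i) < d)).
have hG : forall t, exists d, G t d.
  move=> t; case: (classic (closure S t)) => ht.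
  - case: (hno' t ht) => z [hz hzt].
    case: (hf t ht (f t - f z)) => [|dl [hdl hd]]; first lra.
    exists (dl / INR N); split; first by apply: Rdiv_lt_0_compat.
    split => // _; exists z; split => // y hy hc.
    have hyc : edist t y < dl.
      by apply: close_coords' => // i; rewrite Rabs_minus_sym; exact: hc.
    have := hd y hy hyc; move/abs_lt; lra.
  - have [r [hr hr']] : exists r, 0 < r /\ forall y, S y -> r <= edist t y.
      apply: NNPP => hne; apply: ht => r hr; apply: NNPP => hne2; apply: hne.
      exists r; split => // y hy; apply: Rnot_lt_le => hlt; apply: hne2; by exists y.
    exists (r / 2 / INR N); split.
      apply: Rdiv_lt_0_compat => //; lra.
    split => // _ y hy hc.
    have hr2 : 0 < r / 2 / INR N by apply: Rdiv_lt_0_compat => //; lra.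
    case: (hy _ hr2) => s [hs hys].
    have := hr' s hs; apply: Rlt_not_le.
    apply: close_coords' => // i.
    have := coord_le_edist y s i; have := hc i.
    move=> /abs_lt h1 /abs_le h2; apply: lt_abs.
    have -> : r / INR N = r / 2 / INR N + r / 2 / INR N by field; lra.
    lra.
case: (choice_R G hG) => g hg.
have gpos : forall p, 0 < g (ofT N p) by move=> p; case: (hg (ofT N p)).
pose delta p := mkposreal (g (ofT N p)) (gpos p).
apply: (Compactness.compactness_list N (cstT N (-B)) (cstT N B) delta) => [[l hl]].
have [z0 [hz0 hz0l]] : exists z0, closure S z0 /\ forall t, List.In t l -> closure S (ofT N t) ->
    forall y, closure S y -> (forall i, Rabs (y i - ofT N t i) < g (ofT N t)) -> f z0 < f y.
  elim: l {hl} => [|t l [z1 [hz1 hz1l]]].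
    by exists x0; split; [exact: sub_closure|].
  case: (classic (closure S (ofT N t))) => ht.
  - case: (hg (ofT N t)) => _ [/(_ ht) [zt [hzt hztl]] _].
    case: (Rle_dec (f z1) (f zt)) => hle.
    + exists z1; split => // t' [<- | ht'] hc y hy hyc.
      * have := hztl y hy hyc; lra.
      * exact: (hz1l t' ht' hc y hy hyc).
    + exists zt; split => // t' [<- | ht'] hc y hy hyc.
      * exact: hztl.
      * have := hz1l t' ht' hc y hy hyc; lra.
  - exists z1; split => // t' [<- | ht'] hc y hy hyc.
    * by [].
    * exact: (hz1l t' ht' hc y hy hyc).
have hbz : Compactness.bounded_n N (cstT N (-B)) (cstT N B) (toT N z0).
  apply: bounded_toT => i; apply: abs_le; exact: (closure_abs S i z0 B (fun y hy => hB y hy i)).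
case: (hl _ hbz) => t [htl [_ htc]].
have hc := close_toT N _ z0 t htc.
case: (classic (closure S (ofT N t))) => ht.
- have := hz0l t htl ht z0 hz0 hc; lra.
- case: (hg (ofT N t)) => _ [_ /(_ ht z0 hz0)]; apply; exact: hc.
Qed.


Lemma d2_test (g Dg : R -> R) t0 r s : 0 < r ->
  (forall t, Rabs (t - t0) < r -> g t0 <= g t) ->
  (forall t, Rabs (t - t0) < r -> derivable_pt_lim g t (Dg t)) ->
  derivable_pt_lim Dg t0 s -> 0 <= s.
Proof.
move=> hr hmin hder hs.
have h00 : Rabs (t0 - t0) < r by rewrite Rminus_diag Rabs_R0.
have hD0 : Dg t0 = 0.
  pose pr := exist (fun l => derivable_pt_lim g t0 l) (Dg t0) (hder t0 h00).
  rewrite -(derive_pt_eq_0 g t0 (Dg t0) pr (hder t0 h00)).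
  apply: (deriv_minimum g (t0 - r) (t0 + r)); try lra.
  move=> x h1 h2; apply: hmin; apply: lt_abs; lra.
apply: Rnot_lt_le => hs0.
case: (hs (- s / 2)) => [|delta hdelta]; first lra.
have hd := cond_pos delta.
pose h1 := Rmin (delta / 2) (r / 2).
have hh1 : 0 < h1 by apply: Rmin_pos; lra.
have hh1d : h1 <= delta / 2 by apply: Rmin_l.
have hh1r : h1 <= r / 2 by apply: Rmin_r.
case: (MVT_cor2 g Dg t0 (t0 + h1)) => [|c hc|c [hc1 hc2]]; first lra.
  apply: hder; apply: lt_abs; lra.
have hneg : Dg c < 0.
  have := hdelta (c - t0); rewrite hD0.
  have -> : t0 + (c - t0) = c by ring.
  move=> H; have /abs_lt H' := H ltac:(lra) ltac:(apply: lt_abs; lra).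
  have hq : (Dg c - 0) / (c - t0) < 0 by lra.
  have hpos : 0 < c - t0 by lra.
  apply: Rnot_le_lt => hge; move: hq; apply: Rle_not_lt.
  rewrite Rminus_0_r /Rdiv; apply: Rmult_le_pos; first lra; left; exact: Rinv_0_lt_compat.
have := hmin (t0 + h1) ltac:(apply: lt_abs; lra).
have : Dg c * (t0 + h1 - t0) < 0.
  have -> : t0 + h1 - t0 = h1 by ring.
  nra.
lra.
Qed.


Section Cont.
Context {N : nat} (K : pt N -> Prop).

Lemma cont_sub (K' : pt N -> Prop) f : cont_on K f -> (forall x, K' x -> K x) -> cont_on K' f.
Proof.
move=> hf hK x hx eps he; case: (hf x (hK x hx) eps he) => d [hd h].
exists d; split => // y hy; exact: h (hK y hy).
Qed.

Lemma cont_const c : cont_on K (fun _ => c).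
Proof. move=> x _ eps he; exists 1; split; first lra; move=> *; rewrite Rminus_diag Rabs_R0 //. Qed.

Lemma cont_coord j : cont_on K (fun y => y j).
Proof.
move=> x _ eps he; exists eps; split => // y _ hxy.
rewrite Rabs_minus_sym; exact: (Rle_lt_trans _ _ _ (coord_le_edist x y j)).
Qed.

Lemma cont_plus f g : cont_on K f -> cont_on K g -> cont_on K (fun y => f y + g y).
Proof.
move=> hf hg x hx eps he.
case: (hf x hx (eps/2)) => [|d1 [hd1 h1]]; first lra.
case: (hg x hx (eps/2)) => [|d2 [hd2 h2]]; first lra.
exists (Rmin d1 d2); split; first exact: Rmin_pos.
move=> y hy hxy.
have := h1 y hy (Rlt_le_trans _ _ _ hxy (Rmin_l _ _)).
have := h2 y hy (Rlt_le_trans _ _ _ hxy (Rmin_r _ _)).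
move=> /abs_lt ? /abs_lt ?; apply: lt_abs; lra.
Qed.

Lemma cont_opp f : cont_on K f -> cont_on K (fun y => - f y).
Proof.
move=> hf x hx eps he; case: (hf x hx eps he) => d [hd h]; exists d; split => // y hy hxy.
have := h y hy hxy; move=> /abs_lt ?; apply: lt_abs; lra.
Qed.

Lemma cont_mult f g : cont_on K f -> cont_on K g -> cont_on K (fun y => f y * g y).
Proof.
move=> hf hg x hx eps he.
set f0 := f x; set g0 := g x.
have ha := Rabs_pos f0; have hb := Rabs_pos g0.
pose e1 := eps / (2 * (Rabs g0 + 1)).
pose e2 := Rmin 1 (eps / (2 * (Rabs f0 + 1))).
have he1 : 0 < e1 by apply: Rdiv_lt_0_compat; lra.
have he2 : 0 < e2 by apply: Rmin_pos; [lra| apply: Rdiv_lt_0_compat; lra].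
case: (hf x hx e1 he1) => d1 [hd1 h1].
case: (hg x hx e2 he2) => d2 [hd2 h2].
exists (Rmin d1 d2); split; first exact: Rmin_pos.
move=> y hy hxy.
have k1 := h1 y hy (Rlt_le_trans _ _ _ hxy (Rmin_l _ _)).
have k2 := h2 y hy (Rlt_le_trans _ _ _ hxy (Rmin_r _ _)).
rewrite -/f0 -/g0 in k1 k2.
have -> : f y * g y - f0 * g0 = (f y - f0) * g y + f0 * (g y - g0) by ring.
apply: (Rle_lt_trans _ _ _ (Rabs_triang _ _)); rewrite !Rabs_mult.
have hgy : Rabs (g y) <= Rabs g0 + 1.
  have : Rabs (g y) <= Rabs g0 + Rabs (g y - g0).
    have -> : g y = g0 + (g y - g0) by ring. 
    have -> : g0 + (g y - g0) - g0 = g y - g0 by ring.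
    exact: Rabs_triang.
  have : e2 <= 1 by apply: Rmin_l.
  lra.
have t1 : Rabs (f y - f0) * Rabs (g y) <= e1 * (Rabs g0 + 1).
  apply: Rmult_le_compat; try apply: Rabs_pos; lra.
have t2 : Rabs f0 * Rabs (g y - g0) <= Rabs f0 * (eps / (2 * (Rabs f0 + 1))).
  apply: Rmult_le_compat_l => //; have : e2 <= eps / (2 * (Rabs f0 + 1)) by apply: Rmin_r.
  lra.
have t1' : e1 * (Rabs g0 + 1) = eps / 2 by rewrite /e1; field; lra.
have t2' : Rabs f0 * (eps / (2 * (Rabs f0 + 1))) < eps / 2.
  have -> : Rabs f0 * (eps / (2 * (Rabs f0 + 1))) = eps / 2 * (Rabs f0 / (Rabs f0 + 1)) by field; lra.
  have : Rabs f0 / (Rabs f0 + 1) < 1.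
    apply: (Rmult_lt_reg_r (Rabs f0 + 1)); first lra.
    have -> : Rabs f0 / (Rabs f0 + 1) * (Rabs f0 + 1) = Rabs f0 by field; lra.
    lra.
  move=> h; have : 0 < eps / 2 by lra. nra.
lra.
Qed.

Lemma cont_comp f (g : R -> R) : cont_on K f -> continuity g -> cont_on K (fun y => g (f y)).
Proof.
move=> hf hg x hx eps he.
case: (hg (f x) eps he) => alp [halp h].
case: (hf x hx alp halp) => d [hd hd'].
exists d; split => // y hy hxy.
case: (Req_dec (f y) (f x)) => e.
  rewrite e Rminus_diag Rabs_R0 //.
have := h (f y); rewrite /= /R_dist; apply; split.
  split => //; by move=> /esym.
exact: hd'.
Qed.

End Cont.

Lemma is_partial_ext {N} (f g : pt N -> R) i x l : (forall y, f y = g y) -> is_partial f i x l -> is_partial g i x l.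
Proof. move=> h; have -> : f = g by apply: functional_extensionality. done. Qed.

Lemma p_const {N} c i (x : pt N) : is_partial (fun _ => c) i x 0.
Proof. exact: derivable_pt_lim_const. Qed.

Lemma p_plus {N} (f g : pt N -> R) i x a b : is_partial f i x a -> is_partial g i x b ->
  is_partial (fun y => f y + g y) i x (a + b).
Proof. move=> ha hb; exact: derivable_pt_lim_plus ha hb. Qed.

Lemma p_minus {N} (f g : pt N -> R) i x a b : is_partial f i x a -> is_partial g i x b ->
  is_partial (fun y => f y - g y) i x (a - b).
Proof. move=> ha hb; exact: derivable_pt_lim_minus ha hb. Qed.

Lemma p_mult {N} (f g : pt N -> R) i x a b : is_partial f i x a -> is_partial g i x b ->
  is_partial (fun y => f y * g y) i x (a * g x + f x * b).
Proof.
move=> ha hb; have := derivable_pt_lim_mult _ _ _ _ _ ha hb.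
by rewrite /= upd_id.
Qed.

Lemma p_comp {N} (g : R -> R) g' j i (x : pt N) : derivable_pt_lim g (x j) g' ->
  is_partial (fun y => g (y j)) i x (if i == j then g' else 0).
Proof.
move=> hg; rewrite /is_partial; case: (i =P j) => [eij|hij]; first subst j.
- have -> : (fun t => g (upd x i t i)) = g by apply: functional_extensionality => t; rewrite upd_same.
  exact: hg.
- have -> : (fun t => g (upd x i t j)) = fct_cte (g (x j)).
    apply: functional_extensionality => t; rewrite upd_other //; apply/eqP => e; apply: hij; by rewrite e.
  exact: derivable_pt_lim_const.
Qed.


Lemma is_partial_val {N} (f : pt N -> R) i x l l' : l = l' -> is_partial f i x l -> is_partial f i x l'.
Proof. by move=> ->. Qed.

Lemma minprinc N (S : pt N -> Prop) (z : pt N -> R) Dz D2z B (i0 : 'I_N) :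
  is_open S -> (forall x, S x -> forall i, Rabs (x i) <= B) ->
  cont_on (closure S) z ->
  (forall i x, S x -> is_partial z i x (Dz i x)) ->
  (forall i x, S x -> is_partial (Dz i) i x (D2z i x)) ->
  (forall x, S x -> sumR (fun i => D2z i x) <= 0) ->
  (forall x, closure S x -> ~ S x -> 0 <= z x) ->
  forall x, S x -> 0 <= z x.
Proof.
move=> hop hB hc hD hD2 hsum hbd x1 hx1.
have hN : (0 < N)%nat by apply: (leq_ltn_trans (leq0n _) (ltn_ord i0)).
apply: Rnot_lt_le => hz1.
set a := - z x1.
have hB0 : 0 <= B by apply: (Rle_trans _ _ _ (Rabs_pos (x1 i0))); exact: hB.
set eps := a / (2 * (B * B + 1)).
have ha : 0 < a by rewrite /a; lra.
have heps : 0 < eps by apply: Rdiv_lt_0_compat => //; nra.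
set ze := fun y : pt N => z y - eps * (y i0 * y i0).
have hzc : cont_on (closure S) ze.
  apply: cont_plus => //; apply: cont_opp; apply: cont_mult; first exact: cont_const.
  apply: cont_mult; exact: cont_coord.
case: (attain_min N S ze B hN hB (ex_intro _ x1 hx1) hzc) => ys [hys hmin].
have hle1 : ze ys <= - a.
  apply: (Rle_trans _ _ _ (hmin x1 (sub_closure S x1 hx1))).
  rewrite /ze /a; have := Rle_0_sqr (x1 i0); rewrite /Rsqr => h; nra.
have hS : S ys.
  apply: NNPP => hns; have := hbd ys hys hns.
  have hb := closure_abs S i0 ys B (fun y hy => hB y hy i0) hys.
  have hsq : ys i0 * ys i0 <= B * B.
    move/abs_le: hb => hb; nra.
  have he : eps * (B * B) <= a / 2.
    rewrite /eps; apply: (Rmult_le_reg_r (2 * (B * B + 1))); first nra.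
    have -> : a / (2 * (B * B + 1)) * (B * B) * (2 * (B * B + 1)) = a * (B * B) by field; nra.
    have : 0 < a by rewrite /a; lra.
    nra.
  move: hle1; rewrite /ze => h1 h2.
  have : eps * (ys i0 * ys i0) <= eps * (B * B) by apply: Rmult_le_compat_l; lra.
  have : 0 < a by rewrite /a; lra.
  lra.
case: (hop ys hS) => r [hr hball].
pose Dze i y := Dz i y - eps * (if i == i0 then 2 * y i0 else 0).
pose D2ze i := D2z i ys - eps * (if i == i0 then 2 else 0).
have hpze : forall i y, S y -> is_partial ze i y (Dze i y).
  move=> i y hy; rewrite /ze /Dze; apply: p_minus; first exact: hD.
  apply: (is_partial_val _ _ _ (0 * (y i0 * y i0) + eps * (if i == i0 then 2 * y i0 else 0))); first ring.
  apply: (p_mult (fun _ => eps) (fun y => Rsqr (y i0))); first exact: p_const.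
  exact: (p_comp Rsqr (2 * y i0) i0 i y (derivable_pt_lim_Rsqr _)).
have hloc : forall i t, Rabs (t - ys i) < r -> S (upd ys i t).
  move=> i t ht; apply: hball; apply: (Rle_lt_trans _ _ _ (edist_upd ys i t)).
  by rewrite Rabs_minus_sym.
have hpos : forall i, 0 <= D2ze i.
  move=> i.
  apply: (d2_test (fun t => ze (upd ys i t)) (fun t => Dze i (upd ys i t)) (ys i) r) => //.
  - move=> t ht; rewrite upd_id; apply: hmin; apply: sub_closure; exact: hloc.
  - move=> t ht; have := hpze i _ (hloc i t ht); rewrite /is_partial upd_same.
    have -> : (fun s => ze (upd (upd ys i t) i s)) = (fun s => ze (upd ys i s)).
      by apply: functional_extensionality => s; rewrite upd_upd.
    exact.
  - change (is_partial (Dze i) i ys (D2ze i)).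
    rewrite /D2ze /Dze; apply: (p_minus (Dz i)); first exact: hD2.
    case: (i =P i0) => [->|hne].
    + apply: (is_partial_val _ _ _ (0 * (2 * ys i0) + eps * (if i0 == i0 then 2 else 0))); first by rewrite eqxx; ring.
      apply: (p_mult (fun _ => eps) (fun y => 2 * y i0)); first exact: p_const.
      apply: (p_comp (fun t => 2 * t) 2 i0 i0 ys).
      have := derivable_pt_lim_scal id 2 (ys i0) 1 (derivable_pt_lim_id _).
      by rewrite Rmult_1_r.
    + apply: (is_partial_val _ _ _ 0); first ring.
      apply: (is_partial_ext (fun _ => 0)); last exact: p_const.
      by move=> y; ring.
have := sumR_ge0 D2ze hpos.
rewrite /D2ze.
have -> : sumR (fun i => D2z i ys - eps * (if i == i0 then 2 else 0)) =
  sumR (fun i => D2z i ys) + sumR (fun i => - (eps * (if i == i0 then 2 else 0))).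
  by rewrite -sumR_split.
rewrite (sumR_one (fun i => - (eps * (if i == i0 then 2 else 0))) i0); last by move=> i /negbTE ->; ring.
rewrite eqxx; have := hsum ys hS; lra.
Qed.


Lemma ext_max {n} (x : pt n) l : ext x l ord_max = l.
Proof. by rewrite /ext unlift_none. Qed.
Lemma ext_lift {n} (x : pt n) l i : ext x l (lift ord_max i) = x i.
Proof. by rewrite /ext liftK. Qed.
Lemma base_ext {n} (x : pt n) l : base (ext x l) = x.
Proof. apply: functional_extensionality => i; exact: ext_lift. Qed.
Lemma ext_base {n} (y : pt n.+1) : ext (base y) (y ord_max) = y.
Proof.
apply: functional_extensionality => j; rewrite /ext.
by case: (unliftP ord_max j) => [i ->|->].
Qed.

Lemma sumR_lift {n} (F : 'I_n.+1 -> R) : sumR F = sumR (fun i : 'I_n => F (lift ord_max i)) + F ord_max.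
Proof.
rewrite sumR_recr; congr (_ + _); rewrite /sumR; apply: eq_bigr => i _; congr F.
by apply: val_inj; rewrite /= /bump leqNgt ltn_ord.
Qed.

Lemma edist_base {n} (y y' : pt n.+1) : edist (base y) (base y') <= edist y y'.
Proof.
rewrite /edist; apply: sqrt_le_1_alt; rewrite (sumR_lift (fun i => Rsqr (y i - y' i))).
have := Rle_0_sqr (y ord_max - y' ord_max); rewrite /base; lra.
Qed.

Definition Om {n} (H : pt n -> Prop) (L : R) : pt n.+1 -> Prop :=
  fun y => H (base y) /\ 0 < y ord_max /\ y ord_max < L.

Lemma Om_open {n} (H : pt n -> Prop) L : is_open H -> is_open (Om H L).
Proof.
move=> hop y [hy [h1 h2]]; case: (hop _ hy) => r [hr hb].
exists (Rmin r (Rmin (y ord_max) (L - y ord_max))); split.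
  apply: Rmin_pos => //; apply: Rmin_pos; lra.
move=> y' hd.
have hr1 := Rmin_l r (Rmin (y ord_max) (L - y ord_max)).
have hr2 := Rmin_r r (Rmin (y ord_max) (L - y ord_max)).
have hr3 := Rmin_l (y ord_max) (L - y ord_max).
have hr4 := Rmin_r (y ord_max) (L - y ord_max).
have hc := coord_le_edist y y' ord_max; move: hc => /abs_le hc.
split; last lra.
apply: hb; apply: (Rle_lt_trans _ _ _ (edist_base y y')); lra.
Qed.

Lemma Om_bounded {n} (H : pt n -> Prop) L MH : (forall x, H x -> forall i, Rabs (x i) <= MH) ->
  forall y, Om H L y -> forall j, Rabs (y j) <= Rabs MH + Rabs L.
Proof.
move=> hB y [hy [h1 h2]] j.
have a1 := Rabs_pos MH; have a2 := Rabs_pos L.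
case: (unliftP ord_max j) => [i ->|->].
- have := hB _ hy i; rewrite /base; have := Rle_abs MH; lra.
- rewrite Rabs_right; last lra. have := Rle_abs L; lra.
Qed.

Lemma Om_closure {n} (H : pt n -> Prop) L y : closure (Om H L) y ->
  closure H (base y) /\ 0 <= y ord_max /\ y ord_max <= L.
Proof.
move=> hy; split; last split.
- move=> r hr; case: (hy r hr) => s [[hs _] hd]; exists (base s); split => //.
  exact: (Rle_lt_trans _ _ _ (edist_base y s)).
- apply: (closure_ge (Om H L)) hy => s [_ [? _]]; lra.
- apply: (closure_le (Om H L)) hy => s [_ [_ ?]]; lra.
Qed.

Lemma Om_sub_cyl {n} (H : pt n -> Prop) L y : Om H L y -> cyl H y.
Proof. by case=> ? [? _]; split. Qed.

Lemma Om_bd {n} (H : pt n -> Prop) L y : 0 < L -> closure (Om H L) y -> ~ Om H L y ->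
  (boundary H (base y) /\ 0 <= y ord_max) \/
  (H (base y) /\ y ord_max = 0) \/ (H (base y) /\ y ord_max = L /\ cyl H y).
Proof.
move=> hL hy hn; case: (Om_closure H L y hy) => hb [h0 hL'].
case: (classic (H (base y))) => hH.
- right; case: (Req_dec (y ord_max) 0) => e; first by left.
  right; have e' : y ord_max = L.
    apply: NNPP => e'; apply: hn; split => //; lra.
  split => //; split => //; split => //; lra.
- by left.
Qed.


Lemma dlin (g g' : R -> R) t : derivable_pt_lim g (PI * t) (g' (PI * t)) ->
  derivable_pt_lim (fun t => g (PI * t)) t (PI * g' (PI * t)).
Proof.
move=> hg.
have := derivable_pt_lim_comp (mult_real_fct PI id) g t (PI * 1) (g' (PI * t))
  (derivable_pt_lim_scal id PI t 1 (derivable_pt_lim_id t)) hg.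
have -> : g' (mult_real_fct PI id t) * (PI * 1) = PI * g' (PI * t).
  rewrite /mult_real_fct /id; ring.
done.
Qed.

Lemma dS t : derivable_pt_lim (fun t => sin (PI * t)) t (PI * cos (PI * t)).
Proof. apply: (dlin sin cos); exact: derivable_pt_lim_sin. Qed.
Lemma dE t : derivable_pt_lim (fun t => exp (PI * t)) t (PI * exp (PI * t)).
Proof. apply: (dlin exp exp); exact: derivable_pt_lim_exp. Qed.
Lemma dC t : derivable_pt_lim (fun t => PI * cos (PI * t)) t (PI * (PI * - sin (PI * t))).
Proof.
have := derivable_pt_lim_scal (fun t => cos (PI * t)) PI t _ (dlin cos (fun s => - sin s) t (derivable_pt_lim_cos _)).
done.
Qed.
Lemma dE1 t : derivable_pt_lim (fun t => PI * exp (PI * t)) t (PI * (PI * exp (PI * t))).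
Proof. exact: (derivable_pt_lim_scal (fun t => exp (PI * t)) PI t _ (dE t)). Qed.

Section W.
Variables (n : nat) (i1 : 'I_n) (eps : R).
Let lam : 'I_n.+1 := ord_max.
Let j1 : 'I_n.+1 := lift ord_max i1.

Lemma lj : (lam == j1) = false.
Proof. apply/negbTE; exact: neq_lift. Qed.
Lemma jl : (j1 == lam) = false.
Proof. apply/negbTE; rewrite eq_sym; exact: neq_lift. Qed.

Definition wf (y : pt n.+1) := eps * (sin (PI * y lam) * exp (PI * y j1)).
Definition Dw (i : 'I_n.+1) (y : pt n.+1) :=
  if i == lam then eps * (PI * cos (PI * y lam) * exp (PI * y j1))
  else if i == j1 then eps * (sin (PI * y lam) * (PI * exp (PI * y j1))) else 0.
Definition D2w (i : 'I_n.+1) (y : pt n.+1) :=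
  if i == lam then eps * (PI * (PI * - sin (PI * y lam)) * exp (PI * y j1))
  else if i == j1 then eps * (sin (PI * y lam) * (PI * (PI * exp (PI * y j1)))) else 0.

Lemma pw i y : is_partial wf i y (Dw i y).
Proof.
apply: (is_partial_val _ _ _ (0 * (sin (PI * y lam) * exp (PI * y j1)) + eps *
   ((if i == lam then PI * cos (PI * y lam) else 0) * exp (PI * y j1) +
     sin (PI * y lam) * (if i == j1 then PI * exp (PI * y j1) else 0)))).
  rewrite /Dw; case: (i =P lam) => [->|h1]; first by rewrite lj; ring.
  case: (i == j1); ring.
apply: (p_mult (fun _ => eps) (fun y => sin (PI * y lam) * exp (PI * y j1))); first exact: p_const.
apply: (p_mult (fun y => sin (PI * y lam)) (fun y => exp (PI * y j1))).
- exact: (p_comp (fun t => sin (PI * t)) _ lam i y (dS _)).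
- exact: (p_comp (fun t => exp (PI * t)) _ j1 i y (dE _)).
Qed.

Lemma pDw i y : is_partial (Dw i) i y (D2w i y).
Proof.
rewrite /Dw /D2w; case: (i =P lam) => [->|h1].
- apply: (is_partial_val _ _ _ (0 * (PI * cos (PI * y lam) * exp (PI * y j1)) + eps *
   ((if lam == lam then PI * (PI * - sin (PI * y lam)) else 0) * exp (PI * y j1) +
     PI * cos (PI * y lam) * (if lam == j1 then PI * exp (PI * y j1) else 0)))).
    by rewrite eqxx lj; ring.
  apply: (p_mult (fun _ => eps) (fun y => PI * cos (PI * y lam) * exp (PI * y j1))); first exact: p_const.
  apply: (p_mult (fun y => PI * cos (PI * y lam)) (fun y => exp (PI * y j1))).
  + exact: (p_comp (fun t => PI * cos (PI * t)) _ lam lam y (dC _)).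
  + exact: (p_comp (fun t => exp (PI * t)) _ j1 lam y (dE _)).
- case: (i =P j1) => [->|h2].
  + apply: (is_partial_val _ _ _ (0 * (sin (PI * y lam) * (PI * exp (PI * y j1))) + eps *
     ((if j1 == lam then PI * cos (PI * y lam) else 0) * (PI * exp (PI * y j1)) +
       sin (PI * y lam) * (if j1 == j1 then PI * (PI * exp (PI * y j1)) else 0)))).
      by rewrite eqxx jl; ring.
    apply: (p_mult (fun _ => eps) (fun y => sin (PI * y lam) * (PI * exp (PI * y j1)))); first exact: p_const.
    apply: (p_mult (fun y => sin (PI * y lam)) (fun y => PI * exp (PI * y j1))).
    * exact: (p_comp (fun t => sin (PI * t)) _ lam j1 y (dS _)).
    * exact: (p_comp (fun t => PI * exp (PI * t)) _ j1 j1 y (dE1 _)).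
  + exact: p_const.
Qed.

Lemma sumD2w y : sumR (fun i => D2w i y) = 0.
Proof.
rewrite (sumR_two _ lam j1); first by rewrite /D2w eqxx jl eqxx; ring.
  by rewrite lj.
by move=> i /negbTE h1 /negbTE h2; rewrite /D2w h1 h2.
Qed.

Lemma cont_w (K : pt n.+1 -> Prop) : cont_on K wf.
Proof.
rewrite /wf; apply: cont_mult; first exact: cont_const.
apply: cont_mult.
- apply: (cont_comp K (fun y => PI * y lam) sin); last exact: continuity_sin.
  apply: cont_mult; [exact: cont_const | exact: cont_coord].
- apply: (cont_comp K (fun y => PI * y j1) exp); last exact: (derivable_continuous _ derivable_exp).
  apply: cont_mult; [exact: cont_const | exact: cont_coord].
Qed.

End W.


Lemma sumR_sub {N} (F G : 'I_N -> R) : sumR (fun i => F i - G i) = sumR F - sumR G.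
Proof. by rewrite /Rminus sumR_split sumR_opp. Qed.

Lemma p_coord {N} j i (x : pt N) : is_partial (fun y => y j) i x (if i == j then 1 else 0).
Proof. exact: (p_comp id 1 j i x (derivable_pt_lim_id _)). Qed.

Theorem mainTheorem7 (n : nat) (hn : (1 <= n)%nat)
  (H : pt n -> Prop) (c u phi : pt n -> R) :
  is_domain H -> is_bounded H ->
  (forall x, H x -> 0 <= c x) ->
  C2_on H u -> cont_on (closure H) u ->
  (forall x, H x -> exists d, DHphi H phi u x d /\ d + c x * u x >= 0) ->
  (forall x, boundary H x -> u x = phi x) ->
  (forall x, boundary H x -> 0 <= phi x) ->
  forall x, H x -> 0 <= u x.
Proof.
move=> [hop [_ [xh hxh]]] [MH hMH] hc0 _ hcu hD hbu hbphi x hx.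
have hBH : forall x, H x -> forall i, Rabs (x i) <= MH.
  move=> z hz i; apply: (Rle_trans _ _ _ (coord_le_enorm z i)); exact: hMH.
case: (attain_min n H u MH hn hBH (ex_intro _ xh hxh) hcu) => y0 [hy0 hmin0].
case: (Rle_dec 0 (u y0)) => hu0.
  apply: (Rle_trans _ _ _ hu0); apply: hmin0; exact: sub_closure.
apply: False_ind.
set m := u y0.
have hm : m < 0 by rewrite /m; lra.
have hy0H : H y0.
  apply: NNPP => hn0; have hb : boundary H y0 by [].
  have := hbphi y0 hb; rewrite -hbu //; rewrite -/m; lra.
have humin : forall x, H x -> m <= u x by move=> z hz; apply: hmin0; exact: sub_closure.
case: (hD y0 hy0H) => d [[v [[[Dv [D2v [[hDv [hD2v _]] hlap]]] [[Mv hMv] [hvc [hbot hlat]]]] hrd]] hdc].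
have hMv0 : 0 <= Mv.
  have hc : cyl H (ext y0 1) by split; [rewrite base_ext | rewrite ext_max; lra].
  have := hMv _ hc; have := Rabs_pos (v (ext y0 1)); lra.
have hvbd : forall L y, 0 < L -> closure (Om H L) y -> ~ Om H L y ->
   (0 <= v y) \/ (v y = u (base y) /\ H (base y) /\ y ord_max = 0) \/ (y ord_max = L /\ cyl H y).
  move=> L y hL hcl hno; rewrite -(ext_base y).
  case: (Om_bd H L y hL hcl hno) => [[hb h0]|[[hH h0]|[hH [hl hcyl]]]].
  - left; rewrite hlat //; exact: hbphi.
  - right; left; rewrite base_ext ext_max h0 hbot //.
  - right; right; rewrite ext_base; by split.
have hB : forall L, 0 < L -> forall y, Om H L y -> forall j, Rabs (y j) <= Rabs MH + Rabs L.
  move=> L hL; exact: Om_bounded.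
have hvcont : forall L, cont_on (closure (Om H L)) v.
  move=> L; apply: (cont_sub (closure (cyl H))) => // y; apply: closure_mono; exact: Om_sub_cyl.
have hvm : forall y, cyl H y -> m <= v y.
  move=> y [hyH hyl]; apply: Rnot_lt_le => hlt.
  set eta := (m - v y) / (2 * y ord_max).
  have heta : 0 < eta by apply: Rdiv_lt_0_compat; lra.
  set L := y ord_max + (Mv - m) / eta + 1.
  have hq : 0 < (Mv - m) / eta by apply: Rdiv_lt_0_compat; lra.
  have hL : 0 < L by rewrite /L; lra.
  have hyO : Om H L y by split => //; split => //; rewrite /L; lra.
  pose z := fun w : pt n.+1 => v w - m + eta * w ord_max.
  pose Dz := fun i w => Dv i w - 0 + (0 * w ord_max + eta * (if i == ord_max then 1 else 0)).
  pose D2z := fun (i : 'I_n.+1) w => D2v i i w - 0 + 0.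
  have hcz : cont_on (closure (Om H L)) z.
    apply: cont_plus; first (apply: cont_plus => //; apply: cont_opp; exact: cont_const).
    apply: cont_mult; [exact: cont_const | exact: cont_coord].
  have hpz : forall i w, Om H L w -> is_partial z i w (Dz i w).
    move=> i w hw; apply: p_plus; first (apply: p_minus; [exact: hDv (Om_sub_cyl _ _ _ hw) | exact: p_const]).
    apply: (p_mult (fun _ => eta) (fun w => w ord_max)); [exact: p_const | exact: p_coord].
  have hp2z : forall i w, Om H L w -> is_partial (Dz i) i w (D2z i w).
    move=> i w hw; apply: p_plus; first (apply: p_minus; [exact: hD2v (Om_sub_cyl _ _ _ hw) | exact: p_const]).
    apply: (is_partial_ext (fun _ => 0 * 0 + eta * (if i == ord_max then 1 else 0))).
      by move=> q; ring.
    apply: (is_partial_val _ _ _ 0); last exact: p_const.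
    by case: (i == ord_max); ring.
  have hsz : forall w, Om H L w -> sumR (fun i => D2z i w) <= 0.
    move=> w hw; have -> : sumR (fun i => D2z i w) = sumR (fun i => D2v i i w).
      by rewrite /sumR; apply: eq_bigr => i _; rewrite /D2z; ring.
    rewrite hlap; [lra | exact: Om_sub_cyl hw].
  have hbz : forall w, closure (Om H L) w -> ~ Om H L w -> 0 <= z w.
    move=> w hcl hno; rewrite /z.
    have h0 := (Om_closure H L w hcl).2.1.
    case: (hvbd L w hL hcl hno) => [hv|[[hv [hH h0']]|[hl hcyl]]].
    + have : 0 <= eta * w ord_max by apply: Rmult_le_pos; lra. lra.
    + rewrite hv h0'; have := humin _ hH; lra.
    + rewrite hl; have := hMv _ hcyl; move/abs_le => hv.
      have : eta * L = eta * y ord_max + (Mv - m) + eta by rewrite /L; field; lra.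
      have : 0 < eta * y ord_max by apply: Rmult_lt_0_compat; lra.
      lra.
  have := minprinc n.+1 (Om H L) z Dz D2z (Rabs MH + Rabs L) ord_max (Om_open H L hop) (hB L hL)
    hcz hpz hp2z hsz hbz y hyO.
  rewrite /z.
  have -> : v y - m + eta * y ord_max = (v y - m) / 2.
    rewrite /eta; field; lra.
  lra.
pose i1 : 'I_n := Ordinal hn.
pose E := exp (PI * MH).
have hE : 0 < E by apply: exp_pos.
pose eps := - m / E.
have heps : 0 < eps by apply: Rdiv_lt_0_compat; lra.
have hPI := PI_RGT_0.
pose z := fun w : pt n.+1 => v w - m - wf n i1 eps w.
pose Dz := fun i w => Dv i w - 0 - Dw n i1 eps i w.
pose D2z := fun (i : 'I_n.+1) w => D2v i i w - 0 - D2w n i1 eps i w.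
have hL1 : (0 < 1)%R by lra.
have hcz : cont_on (closure (Om H 1)) z.
  apply: cont_plus; first (apply: cont_plus => //; apply: cont_opp; exact: cont_const).
  apply: cont_opp; exact: cont_w.
have hpz : forall i w, Om H 1 w -> is_partial z i w (Dz i w).
  move=> i w hw; apply: p_minus; last exact: pw.
  apply: p_minus; [exact: hDv (Om_sub_cyl _ _ _ hw) | exact: p_const].
have hp2z : forall i w, Om H 1 w -> is_partial (Dz i) i w (D2z i w).
  move=> i w hw; apply: p_minus; last exact: pDw.
  apply: p_minus; [exact: hD2v (Om_sub_cyl _ _ _ hw) | exact: p_const].
have hsz : forall w, Om H 1 w -> sumR (fun i => D2z i w) <= 0.
  move=> w hw; have -> : sumR (fun i => D2z i w) = sumR (fun i => D2v i i w - D2w n i1 eps i w).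
    by rewrite /sumR; apply: eq_bigr => i _; rewrite /D2z; ring.
  rewrite sumR_sub sumD2w hlap; [lra | exact: Om_sub_cyl hw].
have hbz : forall w, closure (Om H 1) w -> ~ Om H 1 w -> 0 <= z w.
  move=> w hcl hno; rewrite /z /wf.
  case: (Om_closure H 1 w hcl) => hcb [h0 h1].
  case: (hvbd 1 w hL1 hcl hno) => [hv|[[hv [hH h0']]|[hl hcyl]]].
  + have hs1 := SIN_bound (PI * w ord_max).
    have hs0 : 0 <= sin (PI * w ord_max) by apply: sin_ge_0; nra.
    have hwj : w (lift ord_max i1) <= MH.
      have := closure_abs H i1 (base w) MH (fun y hy => hBH y hy i1) hcb.
      rewrite /base; move/abs_le; lra.
    have hee : exp (PI * w (lift ord_max i1)) <= E.
      rewrite /E; case: (Rle_lt_or_eq_dec _ _ hwj) => h.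
      * left; apply: exp_increasing; nra.
      * by rewrite h; right.
    have he0 := exp_pos (PI * w (lift ord_max i1)).
    have : sin (PI * w ord_max) * exp (PI * w (lift ord_max i1)) <= E by nra.
    have hme : eps * E = - m by rewrite /eps; field; lra.
    move=> hh; have : eps * (sin (PI * w ord_max) * exp (PI * w (lift ord_max i1))) <= eps * E.
      by apply: Rmult_le_compat_l; lra.
    lra.
  + rewrite hv h0' Rmult_0_r sin_0 Rmult_0_l Rmult_0_r; have := humin _ hH; lra.
  + rewrite hl Rmult_1_r sin_PI Rmult_0_l Rmult_0_r; have := hvm _ hcyl; lra.
have hlow : forall h, 0 < h < 1 -> eps * (sin (PI * h) * exp (PI * y0 i1)) <= v (ext y0 h) - m.
  move=> h hh.
  have hO : Om H 1 (ext y0 h) by split; [rewrite base_ext | rewrite ext_max; lra].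
  have := minprinc n.+1 (Om H 1) z Dz D2z (Rabs MH + Rabs 1) ord_max (Om_open H 1 hop) (hB 1 hL1)
    hcz hpz hp2z hsz hbz _ hO.
  rewrite /z /wf ext_max ext_lift; lra.
pose c0 := eps * exp (PI * y0 i1) * PI / 2.
have hc0p : 0 < c0.
  rewrite /c0; have := exp_pos (PI * y0 i1) => he.
  have : 0 < eps * exp (PI * y0 i1) by apply: Rmult_lt_0_compat.
  move=> h; have : 0 < eps * exp (PI * y0 i1) * PI by apply: Rmult_lt_0_compat. lra.
have hd0 : c0 <= - d.
  apply: Rnot_lt_le => hlt.
  case: (hrd (c0 + d)) => [|d1 [hd1 hd1']]; first lra.
  case: (derivable_pt_lim_sin 0 (1/2)) => [|ds hds]; first lra.
  have hdsp := cond_pos ds.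
  pose h := Rmin (d1 / 2) (Rmin (1 / 2) (ds / (2 * PI))).
  have hh1 := Rmin_l (d1 / 2) (Rmin (1 / 2) (ds / (2 * PI))).
  have hh2 := Rmin_r (d1 / 2) (Rmin (1 / 2) (ds / (2 * PI))).
  have hh3 := Rmin_l (1 / 2) (ds / (2 * PI)).
  have hh4 := Rmin_r (1 / 2) (ds / (2 * PI)).
  have hdsp2 : 0 < ds / (2 * PI) by apply: Rdiv_lt_0_compat; lra.
  have hhp : 0 < h by apply: Rmin_pos; [lra | apply: Rmin_pos; lra].
  rewrite -/h in hh1 hh2 hh3 hh4.
  have hPh : PI * h < ds.
    have : h <= ds / (2 * PI) by lra.
    move=> hh; have : PI * h <= PI * (ds / (2 * PI)) by apply: Rmult_le_compat_l; lra.
    have -> : PI * (ds / (2 * PI)) = ds / 2 by field; lra.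
    lra.
  have hsinl : PI * h / 2 < sin (PI * h).
    have := hds (PI * h) ltac:(nra) ltac:(apply: lt_abs; nra).
    rewrite Rplus_0_l sin_0 cos_0 Rminus_0_r => /abs_lt [hq _].
    have hph : 0 < PI * h by nra.
    have : sin (PI * h) / (PI * h) > 1 / 2 by lra.
    move=> hq2; have : sin (PI * h) = sin (PI * h) / (PI * h) * (PI * h) by field; lra.
    nra.
  have := hd1' h hhp ltac:(lra).
  rewrite Rplus_0_l (hbot y0 hy0H) -/m => /abs_lt [_ hq].
  have hl := hlow h ltac:(lra).
  have hepe : 0 < eps * exp (PI * y0 i1) by apply: Rmult_lt_0_compat => //; exact: exp_pos.
  have hq2 : c0 < (v (ext y0 h) - m) / h.
    apply: (Rmult_lt_reg_r h) => //.
    have -> : (v (ext y0 h) - m) / h * h = v (ext y0 h) - m by field; lra.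
    have : eps * exp (PI * y0 i1) * (PI * h / 2) < eps * exp (PI * y0 i1) * sin (PI * h).
      by apply: Rmult_lt_compat_l.
    rewrite /c0; lra.
  lra.
have := hc0 y0 hy0H => hcy.
have : c y0 * m <= 0 by nra.
have hmu : u y0 = m by []. rewrite hmu in hdc. lra.
Qed.
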